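(* In the setting of the context (QFSR5 scheme), suppose the flux $f$ is a quadratic polynomial in $u$, and take $\kappa=1/3$, $\kappa_3=-2/3$, $\theta_2=2/3$, $a=2/15$, $b=16/45$, $c=4/5$. Let $\mathcal{E}_j=(\Phi_{j+1/2}-\Phi_{j-1/2})/h$ evaluated on exact nodal values. Then as $h\to0$, $$\mathcal{E}_j=\frac{d}{dx}f(u(x))\Big|_{x=x_j}+O(h^5).$$
   Context: Let $h>0$, uniform grid $x_i=ih$, $i\in\mathbb{Z}$. Let $u$ be a smooth real function of $x$, $u_i=u(x_i)$; let $f$ (flux) and $D$ (dissipation coefficient) be smooth real functions of one variable. Define successive central differences $(u_x)_i=(u_{i+1}-u_{i-1})/(2h)$, $(u_{xx})_i=((u_x)_{i+1}-(u_x)_{i-1})/(2h)$. For the face $i+1/2$ with $j=i$, $k=i+1$, let $T_j=\frac h4((u_x)_k-(u_x)_j)-\frac{h^2}{4}(u_{xx})_j$, $T_k=\frac h4((u_x)_k-(u_x)_j)-\frac{h^2}{4}(u_{xx})_k$, and reconstructed states $u_L=\kappa\frac{u_j+u_k}{2}+(1-\kappa)[u_j+\frac h2(u_x)_j]+\kappa_3T_j$, $u_R=\kappa\frac{u_j+u_k}{2}+(1-\kappa)[u_k-\frac h2(u_x)_k]+\kappa_3T_k$. Let $\Delta_L=u_L-u_j$, $\Delta_R=u_R-u_k$, and with parameters $a,b,c,\theta_2$ define $L_j=aT_j$, $L_k=aT_k$, $Q_j=b\,f''(u_j)\big(\tfrac{h^2}{4}(u_{xx})_j\big)^2+c\,f''(u_j)\big(\tfrac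 h2(u_x)_j\big)T_j$, $Q_k=b\,f''(u_k)\big(\tfrac{h^2}{4}(u_{xx})_k\big)^2+c\,f''(u_k)\big(-\tfrac h2(u_x)_k\big)T_k$. The reconstructed fluxes are $f_L=f(u_j)+f'(u_j)(\Delta_L+L_j)+\frac{\theta_2}{2}\big(f''(u_j)\Delta_L^2+Q_j\big)$, $f_R=f(u_k)+f'(u_k)(\Delta_R+L_k)+\frac{\theta_2}{2}\big(f''(u_k)\Delta_R^2+Q_k\big)$. Numerical flux: $\Phi_{i+1/2}=\frac12(f_L+f_R)-\frac12D_{i+1/2}(u_R-u_L)$, with $D_{i+1/2}=\bar D(u_i,u_{i+1})$ for a smooth symmetric $\bar D$ with $\bar D(v,v)=D(v)$. *)

(* Defs.v *)
From Stdlib Require Import Reals ZArith List.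
Import ListNotations.
From Coquelicot Require Import Coquelicot.
Open Scope R_scope.

Definition smooth1 (g : R -> R) : Prop :=
  forall (n : nat) (x : R), ex_derive_n g n x.

(** Iterated partial derivatives of a function of two variables along a word
    [w] (true = d/dx, false = d/dy), the head of [w] being applied last. *)
Fixpoint ipd (w : list bool) (g : R -> R -> R) : R -> R -> R :=
  match w with
  | nil => g
  | cons b w' =>
      let k := ipd w' g in
      if b then (fun x y => Derive (fun s => k s y) x)
           else (fun x y => Derive (fun t => k x t) y)
  end.

Definition smooth2 (g : R -> R -> R) : Prop :=
  forall (w : list bool),
    (forall x y, ex_derive (fun s => ipd w g s y) x /\
                 ex_derive (fun t => ipd w g x t) y) /\
    (forall p : R * R, continuous (fun q : R * R => ipd w g (fst q) (snd q)) p).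

Section Scheme.
(* grid values v : Z -> R (v i = u_i), spacing h *)
Variables (kap kap3 th2 a b c : R) (f : R -> R) (Dbar : R -> R -> R).
Variables (v : Z -> R) (h : R).

Definition f1 (w : R) : R := Derive f w.
Definition f2 (w : R) : R := Derive (Derive f) w.

Definition ux (i : Z) : R := (v (i + 1)%Z - v (i - 1)%Z) / (2 * h).
Definition uxx (i : Z) : R := (ux (i + 1)%Z - ux (i - 1)%Z) / (2 * h).

(* face i+1/2 : j = i, k = i+1 *)
Definition Tj (i : Z) : R :=
  h / 4 * (ux (i + 1)%Z - ux i) - h ^ 2 / 4 * uxx i.
Definition Tk (i : Z) : R :=
  h / 4 * (ux (i + 1)%Z - ux i) - h ^ 2 / 4 * uxx (i + 1)%Z.

Definition uL (i : Z) : R :=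
  kap * ((v i + v (i + 1)%Z) / 2) + (1 - kap) * (v i + h / 2 * ux i)
  + kap3 * Tj i.
Definition uR (i : Z) : R :=
  kap * ((v i + v (i + 1)%Z) / 2)
  + (1 - kap) * (v (i + 1)%Z - h / 2 * ux (i + 1)%Z) + kap3 * Tk i.

Definition DeltaL (i : Z) : R := uL i - v i.
Definition DeltaR (i : Z) : R := uR i - v (i + 1)%Z.

Definition Lj (i : Z) : R := a * Tj i.
Definition Lk (i : Z) : R := a * Tk i.

Definition Qj (i : Z) : R :=
  b * f2 (v i) * (h ^ 2 / 4 * uxx i) ^ 2
  + c * f2 (v i) * (h / 2 * ux i) * Tj i.
Definition Qk (i : Z) : R :=
  b * f2 (v (i + 1)%Z) * (h ^ 2 / 4 * uxx (i + 1)%Z) ^ 2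
  + c * f2 (v (i + 1)%Z) * (- (h / 2 * ux (i + 1)%Z)) * Tk i.

Definition fL (i : Z) : R :=
  f (v i) + f1 (v i) * (DeltaL i + Lj i)
  + th2 / 2 * (f2 (v i) * DeltaL i ^ 2 + Qj i).
Definition fR (i : Z) : R :=
  f (v (i + 1)%Z) + f1 (v (i + 1)%Z) * (DeltaR i + Lk i)
  + th2 / 2 * (f2 (v (i + 1)%Z) * DeltaR i ^ 2 + Qk i).

(** Numerical flux Phi_{i+1/2}. *)
Definition Phi (i : Z) : R :=
  (fL i + fR i) / 2 - Dbar (v i) (v (i + 1)%Z) * (uR i - uL i) / 2.

Definition Ediff (j : Z) : R := (Phi j - Phi (j - 1)%Z) / h.
End Scheme.

Definition QFSR5_E (f : R -> R) (Dbar : R -> R -> R) (v : Z -> R) (h : R)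
  (j : Z) : R :=
  Ediff (1/3) (-2/3) (2/3) (2/15) (16/45) (4/5) f Dbar v h j.

(* Main.v *)
Require Import Defs.
From Stdlib Require Import Reals ZArith Lra List.
From Coquelicot Require Import Coquelicot.
Open Scope R_scope.

Definition tay (u0 u1 u2 u3 u4 u5 t : R) : R :=
  u0 + u1*t + u2*t^2/2 + u3*t^3/6 + u4*t^4/24 + u5*t^5/120.

Lemma f1_quad (f : R -> R) al be ga :
  (forall w, f w = al + be*w + ga*w^2) -> forall w, f1 f w = be + 2*ga*w.
Proof.
  intros Hf w. unfold f1.
  rewrite (Derive_ext f (fun w => al + be*w + ga*w^2)) by auto.
  apply is_derive_unique. auto_derive; auto. ring.
Qed.

Lemma f2_quad (f : R -> R) al be ga :
  (forall w, f w = al + be*w + ga*w^2) -> forall w, f2 f w = 2*ga.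
Proof.
  intros Hf w. unfold f2.
  rewrite (Derive_ext (Derive f) (fun w => be + 2*ga*w)).
  - apply is_derive_unique. auto_derive; auto. ring.
  - intro t. apply (f1_quad f al be ga Hf).
Qed.

Ltac zsimpl :=
  repeat match goal with
  | |- context [ (?a + ?b)%Z ] =>
      let c := eval vm_compute in (a + b)%Z in change (a + b)%Z with c
  | |- context [ (?a - ?b)%Z ] =>
      let c := eval vm_compute in (a - b)%Z in change (a - b)%Z with c
  end.

Lemma b_add a b A B : Rabs a <= A -> Rabs b <= B -> Rabs (a+b) <= A+B.
Proof. intros. eapply Rle_trans. apply Rabs_triang. lra. Qed.
Lemma b_sub a b A B : Rabs a <= A -> Rabs b <= B -> Rabs (a-b) <= A+B.
Proof. intros. eapply Rle_trans. apply Rabs_triang. rewrite Rabs_Ropp. lra. Qed.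
Lemma b_opp a A : Rabs a <= A -> Rabs (-a) <= A.
Proof. rewrite Rabs_Ropp. auto. Qed.
Lemma b_mul a b A B : Rabs a <= A -> Rabs b <= B -> Rabs (a*b) <= A*B.
Proof. intros. rewrite Rabs_mult. apply Rmult_le_compat; auto; apply Rabs_pos. Qed.
Lemma b_pow a n A : Rabs a <= A -> Rabs (a^n) <= A^n.
Proof. intros. rewrite <- RPow_abs. apply pow_incr. split; auto. apply Rabs_pos. Qed.
Lemma b_div a b A : Rabs a <= A -> Rabs (a/b) <= A * Rabs (/b).
Proof. intros. unfold Rdiv. rewrite Rabs_mult. apply Rmult_le_compat_r; auto. apply Rabs_pos. Qed.
Lemma b_refl a : Rabs a <= Rabs a.
Proof. apply Rle_refl. Qed.

Ltac bnd :=
  match goal with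
  | H : Rabs ?e <= _ |- Rabs ?e <= _ => exact H
  | |- Rabs (_ + _) <= _ => eapply b_add; [bnd | bnd]
  | |- Rabs (_ - _) <= _ => eapply b_sub; [bnd | bnd]
  | |- Rabs (- _) <= _ => eapply b_opp; bnd
  | |- Rabs (_ * _) <= _ => eapply b_mul; [bnd | bnd]
  | |- Rabs (_ ^ _) <= _ => eapply b_pow; bnd
  | |- Rabs (_ / _) <= _ => eapply b_div; bnd
  | |- Rabs _ <= _ => apply b_refl
  end.

Lemma Qbound (be ga g0 u0 u1 u2 u3 u4 u5 M K : R) : exists C, forall h em3 em2 em1 e0 e1 e2 e3 d1 d2,
  Rabs h <= 1 -> Rabs em3 <= M -> Rabs em2 <= M -> Rabs em1 <= M -> Rabs e0 <= M ->
  Rabs e1 <= M -> Rabs e2 <= M -> Rabs e3 <= M -> Rabs d1 <= K -> Rabs d2 <= K ->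
  Rabs (be*((3/4)*e1 + (-3/20)*e2 + (1/60)*e3 + (-3/4)*em1 + (3/20)*em2 + (-1/60)*em3) + ga*(((37/1080)*h*u2*u5 + (17/360)*h*u3*u4 + (79/3240)*h^3*u4*u5) + ((497/540)*((tay u0 u1 u2 u3 u4 u5 (0 * h))*e1 + e0*(tay u0 u1 u2 u3 u4 u5 (1 * h))) + (-497/540)*((tay u0 u1 u2 u3 u4 u5 (0 * h))*em1 + e0*(tay u0 u1 u2 u3 u4 u5 ((-1) * h))) + (-119/1080)*((tay u0 u1 u2 u3 u4 u5 (0 * h))*e2 + e0*(tay u0 u1 u2 u3 u4 u5 (2 * h))) + (119/1080)*((tay u0 u1 u2 u3 u4 u5 (0 * h))*em2 + e0*(tay u0 u1 u2 u3 u4 u5 ((-2) * h))) + (3287/8640)*((tay u0 u1 u2 u3 u4 u5 (1 * h))*e1 + e1*(tay u0 u1 u2 u3 u4 u5 (1 * h))) + (-227/1080)*((tay u0 u1 u2 u3 u4 u5 (1 * h))*e2 + e1*(tay u0 u1 u2 u3 u4 u5 (2 * h))) + (1/540)*((tay u0 u1 u2 u3 u4 u5 (1 * h))*em2 + e1*(tay u0 u1 u2 u3 u4 u5 ((-2) * h))) + (-3287/8640)*((tay u0 u1 u2 u3 u4 u5 ((-1) * h))*em1 + em1*(tay u0 u1 u2 u3 u4 u5 ((-1) * h))) + (-1/540)*((tay u0 u1 u2 u3 u4 u5 (2 * h))*em1 + e2*(tay u0 u1 u2 u3 u4 u5 ((-1) * h))) + (227/1080)*((tay u0 u1 u2 u3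 u4 u5 ((-1) * h))*em2 + em1*(tay u0 u1 u2 u3 u4 u5 ((-2) * h))) + (1/80)*((tay u0 u1 u2 u3 u4 u5 (2 * h))*e2 + e2*(tay u0 u1 u2 u3 u4 u5 (2 * h))) + (-1/80)*((tay u0 u1 u2 u3 u4 u5 ((-2) * h))*em2 + em2*(tay u0 u1 u2 u3 u4 u5 ((-2) * h))) + (29/1080)*((tay u0 u1 u2 u3 u4 u5 (1 * h))*e3 + e1*(tay u0 u1 u2 u3 u4 u5 (3 * h))) + (1/135)*((tay u0 u1 u2 u3 u4 u5 (0 * h))*e3 + e0*(tay u0 u1 u2 u3 u4 u5 (3 * h))) + (-1/360)*((tay u0 u1 u2 u3 u4 u5 (2 * h))*e3 + e2*(tay u0 u1 u2 u3 u4 u5 (3 * h))) + (-1/4320)*((tay u0 u1 u2 u3 u4 u5 (3 * h))*em1 + e3*(tay u0 u1 u2 u3 u4 u5 ((-1) * h))) + (1/960)*((tay u0 u1 u2 u3 u4 u5 (3 * h))*e3 + e3*(tay u0 u1 u2 u3 u4 u5 (3 * h))) + (-29/1080)*((tay u0 u1 u2 u3 u4 u5 ((-1) * h))*em3 + em1*(tay u0 u1 u2 u3 u4 u5 ((-3) * h))) + (-1/135)*((tay u0 u1 u2 u3 u4 u5 (0 * h))*em3 + e0*(tay u0 u1 u2 u3 u4 u5 ((-3) * h))) + (1/360)*((tay u0 u1 u2 u3 u4 u5 ((-2) * h))*em3 + em2*(tay u0 u1 u2 u3 u4 u5 ((-3) * h))) + (1/4320)*((tay u0 u1 u2 u3 u4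 u5 (1 * h))*em3 + e1*(tay u0 u1 u2 u3 u4 u5 ((-3) * h))) + (-1/960)*((tay u0 u1 u2 u3 u4 u5 ((-3) * h))*em3 + em3*(tay u0 u1 u2 u3 u4 u5 ((-3) * h)))) + h^6*((497/540)*e0*e1 + (-119/1080)*e0*e2 + (1/135)*e0*e3 + (-497/540)*e0*em1 + (119/1080)*e0*em2 + (-1/135)*e0*em3 + (-227/1080)*e1*e2 + (29/1080)*e1*e3 + (1/540)*e1*em2 + (1/4320)*e1*em3 + (3287/8640)*e1^2 + (-1/360)*e2*e3 + (-1/540)*e2*em1 + (1/80)*e2^2 + (-1/4320)*e3*em1 + (1/960)*e3^2 + (227/1080)*em1*em2 + (-29/1080)*em1*em3 + (-3287/8640)*em1^2 + (1/360)*em2*em3 + (-1/80)*em2^2 + (-1/960)*em3^2)) - (g0*(0 + ((-5/12)*e0 + (5/12)*e1 + (-5/24)*e2 + (1/24)*e3 + (5/24)*em1 + (-1/24)*em2) - ((5/12)*e0 + (-5/24)*e1 + (1/24)*e2 + (-5/12)*em1 + (5/24)*em2 + (-1/24)*em3)) + d1*(((1/24)*u5) + h*((-5/12)*e0 + (5/12)*e1 + (-5/24)*e2 + (1/24)*e3 + (5/24)*em1 + (-1/24)*em2)) + d2*(((1/24)*u5) + h*((5/12)*e0 + (-5/24)*e1 + (1/24)*e2 + (-5/12)*em1 + (5/24)*em2 + (-1/24)*em3)))/2) <= C.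
Proof.
  eexists. intros. unfold tay. bnd.
Qed.

Lemma key (f : R -> R) (Dbar : R -> R -> R) (v : Z -> R) (h al be ga u0 u1 u2 u3 u4 u5
  em3 em2 em1 e0 e1 e2 e3 g0 d1 d2 : R) :
  h <> 0 -> (forall w, f w = al + be*w + ga*w^2) ->
  v (-3)%Z = tay u0 u1 u2 u3 u4 u5 ((-3) * h) + em3 * h^6 ->
  v (-2)%Z = tay u0 u1 u2 u3 u4 u5 ((-2) * h) + em2 * h^6 ->
  v (-1)%Z = tay u0 u1 u2 u3 u4 u5 ((-1) * h) + em1 * h^6 ->
  v 0%Z = tay u0 u1 u2 u3 u4 u5 (0 * h) + e0 * h^6 ->
  v 1%Z = tay u0 u1 u2 u3 u4 u5 (1 * h) + e1 * h^6 ->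
  v 2%Z = tay u0 u1 u2 u3 u4 u5 (2 * h) + e2 * h^6 ->
  v 3%Z = tay u0 u1 u2 u3 u4 u5 (3 * h) + e3 * h^6 ->
  Dbar (v 0%Z) (v 1%Z) = g0 + h*d1 ->
  Dbar (v (-1)%Z) (v 0%Z) = g0 - h*d2 ->
  QFSR5_E f Dbar v h 0 - (be + 2*ga*u0)*u1 = h^5 * (be*((3/4)*e1 + (-3/20)*e2 + (1/60)*e3 + (-3/4)*em1 + (3/20)*em2 + (-1/60)*em3) + ga*(((37/1080)*h*u2*u5 + (17/360)*h*u3*u4 + (79/3240)*h^3*u4*u5) + ((497/540)*((tay u0 u1 u2 u3 u4 u5 (0 * h))*e1 + e0*(tay u0 u1 u2 u3 u4 u5 (1 * h))) + (-497/540)*((tay u0 u1 u2 u3 u4 u5 (0 * h))*em1 + e0*(tay u0 u1 u2 u3 u4 u5 ((-1) * h))) + (-119/1080)*((tay u0 u1 u2 u3 u4 u5 (0 * h))*e2 + e0*(tay u0 u1 u2 u3 u4 u5 (2 * h))) + (119/1080)*((tay u0 u1 u2 u3 u4 u5 (0 * h))*em2 + e0*(tay u0 u1 u2 u3 u4 u5 ((-2) * h))) + (3287/8640)*((tay u0 u1 u2 u3 u4 u5 (1 * h))*e1 + e1*(tay u0 u1 u2 u3 u4 u5 (1 * h))) + (-227/1080)*((tay u0 u1 u2 u3 u4 u5 (1 * h))*e2 + e1*(tay u0 u1 u2 u3 u4 u5 (2 * h))) + (1/540)*((tay u0 u1 u2 u3 u4 u5 (1 * h))*em2 + e1*(tay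 u0 u1 u2 u3 u4 u5 ((-2) * h))) + (-3287/8640)*((tay u0 u1 u2 u3 u4 u5 ((-1) * h))*em1 + em1*(tay u0 u1 u2 u3 u4 u5 ((-1) * h))) + (-1/540)*((tay u0 u1 u2 u3 u4 u5 (2 * h))*em1 + e2*(tay u0 u1 u2 u3 u4 u5 ((-1) * h))) + (227/1080)*((tay u0 u1 u2 u3 u4 u5 ((-1) * h))*em2 + em1*(tay u0 u1 u2 u3 u4 u5 ((-2) * h))) + (1/80)*((tay u0 u1 u2 u3 u4 u5 (2 * h))*e2 + e2*(tay u0 u1 u2 u3 u4 u5 (2 * h))) + (-1/80)*((tay u0 u1 u2 u3 u4 u5 ((-2) * h))*em2 + em2*(tay u0 u1 u2 u3 u4 u5 ((-2) * h))) + (29/1080)*((tay u0 u1 u2 u3 u4 u5 (1 * h))*e3 + e1*(tay u0 u1 u2 u3 u4 u5 (3 * h))) + (1/135)*((tay u0 u1 u2 u3 u4 u5 (0 * h))*e3 + e0*(tay u0 u1 u2 u3 u4 u5 (3 * h))) + (-1/360)*((tay u0 u1 u2 u3 u4 u5 (2 * h))*e3 + e2*(tay u0 u1 u2 u3 u4 u5 (3 * h))) + (-1/4320)*((tay u0 u1 u2 u3 u4 u5 (3 * h))*em1 + e3*(tay u0 u1 u2 u3 u4 u5 ((-1) * h))) + (1/960)*((tay u0 u1 u2 u3 u4 u5 (3 * h))*e3 + e3*(tay u0 u1 u2 u3 u4 u5 (3 * h))) + (-29/1080)*((tay u0 u1 u2 u3 u4 u5 ((-1) * h))*em3 + em1*(tay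 u0 u1 u2 u3 u4 u5 ((-3) * h))) + (-1/135)*((tay u0 u1 u2 u3 u4 u5 (0 * h))*em3 + e0*(tay u0 u1 u2 u3 u4 u5 ((-3) * h))) + (1/360)*((tay u0 u1 u2 u3 u4 u5 ((-2) * h))*em3 + em2*(tay u0 u1 u2 u3 u4 u5 ((-3) * h))) + (1/4320)*((tay u0 u1 u2 u3 u4 u5 (1 * h))*em3 + e1*(tay u0 u1 u2 u3 u4 u5 ((-3) * h))) + (-1/960)*((tay u0 u1 u2 u3 u4 u5 ((-3) * h))*em3 + em3*(tay u0 u1 u2 u3 u4 u5 ((-3) * h)))) + h^6*((497/540)*e0*e1 + (-119/1080)*e0*e2 + (1/135)*e0*e3 + (-497/540)*e0*em1 + (119/1080)*e0*em2 + (-1/135)*e0*em3 + (-227/1080)*e1*e2 + (29/1080)*e1*e3 + (1/540)*e1*em2 + (1/4320)*e1*em3 + (3287/8640)*e1^2 + (-1/360)*e2*e3 + (-1/540)*e2*em1 + (1/80)*e2^2 + (-1/4320)*e3*em1 + (1/960)*e3^2 + (227/1080)*em1*em2 + (-29/1080)*em1*em3 + (-3287/8640)*em1^2 + (1/360)*em2*em3 + (-1/80)*em2^2 + (-1/960)*em3^2)) - (g0*(0 + ((-5/12)*e0 + (5/12)*e1 + (-5/24)*e2 + (1/24)*e3 + (5/24)*em1 + (-1/24)*em2) - ((5/12)*e0 + (-5/24)*e1 + (1/24)*e2 + (-5/12)*em1 + (5/24)*em2 + (-1/24)*em3)) + d1*(((1/24)*u5) + h*((-5/12)*e0 + (5/12)*e1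 + (-5/24)*e2 + (1/24)*e3 + (5/24)*em1 + (-1/24)*em2)) + d2*(((1/24)*u5) + h*((5/12)*e0 + (-5/24)*e1 + (1/24)*e2 + (-5/12)*em1 + (5/24)*em2 + (-1/24)*em3)))/2).
Proof.
  intros hn Hf Hm3 Hm2 Hm1 H0 H1 H2 H3 HD0 HDm.
  unfold QFSR5_E, Ediff, Phi, fL, fR, DeltaL, DeltaR, Lj, Lk, Qj, Qk, uL, uR, Tj, Tk, uxx, ux.
  zsimpl.
  rewrite HD0, HDm.
  rewrite !(f1_quad f al be ga Hf), !(f2_quad f al be ga Hf), !Hf.
  rewrite Hm3, Hm2, Hm1, H0, H1, H2, H3.
  unfold tay.
  field. auto.
Qed.

Lemma cont_bound (F : R -> R) a b :
  (forall z, a <= z <= b -> continuous F z) ->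
  exists K, forall z, a <= z <= b -> Rabs (F z) <= K.
Proof.
  intros HF. destruct (Rle_dec a b) as [hab|hab].
  - destruct (continuity_ab_maj (fun z => Rabs (F z)) a b hab) as [m [Hm _]].
    + intros c Hc. apply continuity_pt_filterlim.
      apply continuous_Rabs_comp. apply HF; auto.
    + exists (Rabs (F m)). auto.
  - exists 0. intros z Hz. lra.
Qed.

Lemma INR_fact6 : forall D r t : nat -> R, True. Proof. auto. Qed.

Lemma sum6 (t r : R) (D : nat -> R) :
  sum_f_R0 (fun m => t ^ m / INR (fact m) * D m) 5 + t ^ 6 / INR (fact 6) * r
  = tay (D 0%nat) (D 1%nat) (D 2%nat) (D 3%nat) (D 4%nat) (D 5%nat) t + t^6 / 720 * r.
Proof.
  unfold tay. simpl sum_f_R0.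
  replace (INR (fact 0)) with 1 by (simpl; ring).
  replace (INR (fact 1)) with 1 by (simpl; ring).
  replace (INR (fact 2)) with 2 by (simpl; ring).
  replace (INR (fact 3)) with 6 by (simpl; ring).
  replace (INR (fact 4)) with 24 by (simpl; ring).
  replace (INR (fact 5)) with 120 by (simpl; ring).
  replace (INR (fact 6)) with 720 by (simpl; ring).
  field.
Qed.

Lemma taylor_bound (g : R -> R) (x : R) : smooth1 g ->
  exists M, 0 <= M /\ forall t, Rabs t <= 3 ->
    Rabs (g (x + t) - tay (Derive_n g 0 x) (Derive_n g 1 x) (Derive_n g 2 x)
             (Derive_n g 3 x) (Derive_n g 4 x) (Derive_n g 5 x) t) <= M * Rabs t ^ 6.
Proof.
  intros Hg.
  destruct (cont_bound (Derive_n g 6) (x-3) (x+3)) as [K HK].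
  { intros z _. apply (@ex_derive_continuous R_AbsRing R_NormedModule). exact (Hg 7%nat z). }
  assert (K0 : 0 <= K). { eapply Rle_trans. apply Rabs_pos. apply (HK x). lra. }
  exists (K/720). split. { lra. }
  intros t Ht.
  destruct (Rtotal_order t 0) as [tn|[tz|tp]].
  - set (w := fun s => g (- s)).
    assert (Hloc : forall n y, locally (- y) (fun z : R_UniformSpace => forall k : nat, (k <= n)%nat -> ex_derive_n g k z)).
    { intros n y. apply filter_forall. intros z k _. apply Hg. }
    destruct (Taylor_Lagrange w 5 (-x) (-x - t)) as [z [Hz Heq]].
    { lra. }
    { intros s _ k _. apply ex_derive_n_comp_opp. apply Hloc. }
    assert (Hw : forall m y, Derive_n w m y = (-1)^m * Derive_n g m (- y)).
    { intros m y. unfold w. apply Derive_n_comp_opp. apply Hloc. }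
    assert (E1 : w (-x - t) = g (x + t)). { unfold w. f_equal. ring. }
    rewrite E1 in Heq. rewrite Heq.
    replace (-x - t - - x) with (-t) by ring.
    rewrite (sum6 (-t) (Derive_n w 6 z) (fun m => Derive_n w m (-x))).
    rewrite !Hw. rewrite Ropp_involutive.
    unfold tay.
    match goal with |- Rabs ?a <= _ => replace a with ((-t)^6/720 * ((-1)^6 * Derive_n g 6 (- z))) by field end.

    rewrite Rabs_mult. unfold Rdiv. rewrite Rabs_mult, <- RPow_abs, Rabs_Ropp.
    rewrite (Rabs_pos_eq (/720)) by lra.
    rewrite Rabs_mult. replace (Rabs ((-1)^6)) with 1 by (simpl; rewrite Rabs_pos_eq; lra).
    assert (Rabs (Derive_n g 6 (- z)) <= K). { apply HK. apply Rabs_le_between in Ht. lra. }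
    assert (0 <= Rabs t ^ 6). { apply pow_le, Rabs_pos. }
    nra.
  - subst t. rewrite Rplus_0_r. unfold tay. change (Derive_n g 0 x) with (g x).
    match goal with |- Rabs ?a <= _ => replace a with 0 by field end.
    rewrite Rabs_R0. simpl. lra.
  - destruct (Taylor_Lagrange g 5 x (x + t)) as [z [Hz Heq]].
    { lra. }
    { intros s _ k _. apply Hg. }
    rewrite Heq. replace (x + t - x) with t by ring.
    rewrite (sum6 t (Derive_n g 6 z) (fun m => Derive_n g m x)).
    match goal with |- Rabs ?a <= _ =>
      replace a with (t^6/720 * Derive_n g 6 z) by field end.
    rewrite Rabs_mult. unfold Rdiv. rewrite Rabs_mult, <- RPow_abs.
    rewrite (Rabs_pos_eq (/720)) by lra.
    assert (Rabs (Derive_n g 6 z) <= K). { apply HK. apply Rabs_le_between in Ht. lra. }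
    assert (0 <= Rabs t ^ 6). { apply pow_le, Rabs_pos. }
    nra.
Qed.

Lemma lip0 (G : R -> R) :
  (forall s, ex_derive G s) -> (forall s, continuous (Derive G) s) ->
  exists K, 0 <= K /\ forall s, Rabs s <= 1 -> Rabs (G s - G 0) <= K * Rabs s.
Proof.
  intros HG HC.
  destruct (cont_bound (Derive G) (-1) 1) as [K HK]. { intros; apply HC. }
  assert (K0 : 0 <= K). { eapply Rle_trans. apply Rabs_pos. apply (HK 0). lra. }
  exists K. split; auto. intros s Hs.
  destruct (MVT_gen G 0 s (Derive G)) as [c [Hc Heq]].
  { intros y _. apply Derive_correct, HG. }
  { intros y _. apply continuity_pt_filterlim. apply (@ex_derive_continuous R_AbsRing R_NormedModule), HG. }
  rewrite Heq, Rabs_mult. replace (s - 0) with s by ring.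
  apply Rmult_le_compat_r. apply Rabs_pos. apply HK.
  revert Hc. unfold Rmin, Rmax. destruct (Rle_dec 0 s); apply Rabs_le_between in Hs; lra.
Qed.

Lemma Gf_props (Dbar : R -> R -> R) (u : R -> R) (x : R) :
  smooth2 Dbar -> smooth1 u ->
  (forall s, ex_derive (fun s => Dbar (u x) (u (x + s))) s) /\
  (forall s, continuous (Derive (fun s => Dbar (u x) (u (x + s)))) s).
Proof.
  intros HDb Hu. set (c := u x).
  assert (HDy : forall y, ex_derive (fun t => Dbar c t) y).
  { intros y. exact (proj2 (proj1 (HDb nil) c y)). }
  assert (Hu1 : forall z, ex_derive u z). { intros z. exact (Hu 1%nat z). }
  assert (Hsx : forall s, ex_derive (fun s => u (x + s)) s).
  { intros s. apply (ex_derive_comp u (fun s => x + s)). apply Hu1. auto_derive; auto. }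
  assert (HdS : forall s, Derive (fun s => u (x + s)) s = Derive u (x + s)).
  { intros s. rewrite (Derive_comp u (fun s => x + s)). 2: apply Hu1. 2: auto_derive; auto.
    replace (Derive (fun s => x + s) s) with 1. ring.
    symmetry. apply is_derive_unique. auto_derive; auto. }
  split.
  - intros s. apply (ex_derive_comp (fun t => Dbar c t) (fun s => u (x + s))). apply HDy. apply Hsx.
  - intros s.
    apply continuous_ext with (f := fun s => Derive u (x + s) * ipd (false :: nil) Dbar c (u (x + s))).
    { intros s'. rewrite (Derive_comp (fun t => Dbar c t) (fun s => u (x + s))).
      rewrite HdS. reflexivity. apply HDy. apply Hsx. }
    apply (continuous_mult (fun s => Derive u (x + s)) (fun s => ipd (false :: nil) Dbar c (u (x + s)))).
    + apply (continuous_comp (fun s => x + s) (Derive u)).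
      * apply (@ex_derive_continuous R_AbsRing R_NormedModule). auto_derive; auto.
      * apply (@ex_derive_continuous R_AbsRing R_NormedModule). exact (Hu 2%nat (x + s)).
    + apply (continuous_comp (fun s => u (x + s)) (fun y => ipd (false :: nil) Dbar c y)).
      * apply (@ex_derive_continuous R_AbsRing R_NormedModule). apply Hsx.
      * apply (continuous_comp_2 (fun _ => c) (fun y => y) (fun a b => ipd (false :: nil) Dbar a b)).
        apply continuous_const. apply continuous_id.
        exact (proj2 (HDb (false :: nil)) (c, u (x + s))).
Qed.


Lemma e_bound M r c h : 0 < h <= 1 -> 0 <= M -> Rabs c <= 3 ->
  Rabs r <= M * Rabs (c*h)^6 -> Rabs (r/h^6) <= 729*M.
Proof.
  intros Hh M0 Hc Hr. unfold Rdiv. rewrite Rabs_mult.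
  rewrite Rabs_mult in Hr. rewrite Rpow_mult_distr in Hr.
  rewrite (Rabs_pos_eq h) in Hr by lra.
  rewrite Rabs_inv. rewrite (Rabs_pos_eq (h^6)) by (apply pow_le; lra).
  assert (H6 : 0 < h^6) by (apply pow_lt; lra).
  assert (Hc6 : Rabs c ^ 6 <= 3^6). { apply pow_incr. split; auto. apply Rabs_pos. }
  apply (Rmult_le_reg_r (h^6)); auto.
  rewrite Rmult_assoc, Rinv_l by lra. rewrite Rmult_1_r.
  assert (M * (Rabs c^6 * h^6) <= M * (3^6 * h^6)).
  { apply Rmult_le_compat_l; auto. apply Rmult_le_compat_r; lra. }
  replace (3^6) with 729 in H by ring. lra.
Qed.

Lemma d_bound K a b s h : 0 < h -> Rabs s = h -> Rabs (a - b) <= K * Rabs s ->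
  Rabs ((a - b) / h) <= K.
Proof.
  intros h0 Hs H. unfold Rdiv. rewrite Rabs_mult, Rabs_inv, (Rabs_pos_eq h) by lra.
  rewrite Hs in H. apply (Rmult_le_reg_r h); auto.
  rewrite Rmult_assoc, Rinv_l by lra. lra.
Qed.

Lemma ch_le c h : Rabs c <= 3 -> 0 < h <= 1 -> Rabs (c*h) <= 3.
Proof. intros. rewrite Rabs_mult, (Rabs_pos_eq h) by lra.
  assert (0 <= Rabs c) by apply Rabs_pos. nra. Qed.

Ltac absc := unfold Rabs; destruct (Rcase_abs _); lra.

Theorem mainTheorem8 :
  forall (f : R -> R) (D : R -> R) (Dbar : R -> R -> R) (u : R -> R),
    (exists al be ga : R, forall w, f w = al + be * w + ga * w ^ 2) ->
    smooth1 D ->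
    smooth2 Dbar ->
    (forall v w, Dbar v w = Dbar w v) ->
    (forall w, Dbar w w = D w) ->
    smooth1 u ->
    forall x : R,
      exists C delta : R, 0 < delta /\
        forall h : R, 0 < h < delta ->
          Rabs (QFSR5_E f Dbar (fun i : Z => u (x + IZR i * h)) h 0%Z
                - Derive (fun y => f (u y)) x) <= C * h ^ 5.
Proof.
  intros f D Dbar u [al [be [ga Hf]]] HD HDb Hsym Hdiag Hu x.
  assert (Htar : Derive (fun y => f (u y)) x = (be + 2*ga*Derive_n u 0 x) * Derive_n u 1 x).
  { change (Derive_n u 0 x) with (u x). change (Derive_n u 1 x) with (Derive u x).
    rewrite (Derive_ext (fun y => f (u y)) (fun y => al + be * u y + ga * u y ^ 2)) by auto.
    apply is_derive_unique. auto_derive. { pose proof (Hu 1%nat x) as H1. simpl in H1. repeat split; exact H1. } change (Derive (fun x0 => u x0) x) with (Derive u x). ring. }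
  destruct (taylor_bound u x Hu) as [M [M0 HM]].
  destruct (Gf_props Dbar u x HDb Hu) as [G1 G2].
  destruct (lip0 _ G1 G2) as [K [K0 HK]].
  destruct (Qbound be ga (Dbar (u x) (u (x + 0))) (Derive_n u 0 x) (Derive_n u 1 x) (Derive_n u 2 x)
     (Derive_n u 3 x) (Derive_n u 4 x) (Derive_n u 5 x) (729*M) K) as [C HC].
  exists C, 1. split; [lra|]. intros h [h0 h1].
  rewrite Htar.
  set (g0 := Dbar (u x) (u (x + 0))) in *.
  pose (T := tay (Derive_n u 0 x) (Derive_n u 1 x) (Derive_n u 2 x)
     (Derive_n u 3 x) (Derive_n u 4 x) (Derive_n u 5 x)).
  pose (ee := fun c : R => (u (x + c * h) - T (c * h)) / h ^ 6).
  pose (d1 := (Dbar (u x) (u (x + h)) - g0) / h).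
  pose (d2 := (g0 - Dbar (u x) (u (x + - h))) / h).
  assert (hn : h <> 0) by lra.
  assert (Hv : forall c, u (x + c * h) = T (c * h) + ee c * h ^ 6).
  { intros c. unfold ee. field. auto. }
  rewrite (key f Dbar (fun i : Z => u (x + IZR i * h)) h al be ga
     (Derive_n u 0 x) (Derive_n u 1 x) (Derive_n u 2 x)
     (Derive_n u 3 x) (Derive_n u 4 x) (Derive_n u 5 x)
     (ee (-3)) (ee (-2)) (ee (-1)) (ee 0) (ee 1) (ee 2) (ee 3) g0 d1 d2 hn Hf);
    try (cbv beta; apply Hv).
  - rewrite Rabs_mult, (Rabs_pos_eq (h^5)) by (apply pow_le; lra).
    rewrite Rmult_comm. apply Rmult_le_compat_r. { apply pow_le; lra. }
    apply HC.
    + rewrite Rabs_pos_eq; lra.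
    + unfold ee; cbv beta. apply (e_bound M _ (-3) h); [lra|lra|absc|apply HM; apply ch_le; [absc|lra]].
    + unfold ee; cbv beta. apply (e_bound M _ (-2) h); [lra|lra|absc|apply HM; apply ch_le; [absc|lra]].
    + unfold ee; cbv beta. apply (e_bound M _ (-1) h); [lra|lra|absc|apply HM; apply ch_le; [absc|lra]].
    + unfold ee; cbv beta. apply (e_bound M _ (0) h); [lra|lra|absc|apply HM; apply ch_le; [absc|lra]].
    + unfold ee; cbv beta. apply (e_bound M _ (1) h); [lra|lra|absc|apply HM; apply ch_le; [absc|lra]].
    + unfold ee; cbv beta. apply (e_bound M _ (2) h); [lra|lra|absc|apply HM; apply ch_le; [absc|lra]].
    + unfold ee; cbv beta. apply (e_bound M _ (3) h); [lra|lra|absc|apply HM; apply ch_le; [absc|lra]].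
    + unfold d1. apply (d_bound K _ _ h h); auto. rewrite Rabs_pos_eq; lra.
      pose proof (HK h) as Hk. cbv beta in Hk. apply Hk. rewrite Rabs_pos_eq; lra.
    + unfold d2. apply (d_bound K _ _ (-h) h); auto. rewrite Rabs_Ropp, Rabs_pos_eq; lra.
      rewrite Rabs_minus_sym.
      pose proof (HK (-h)) as Hk. cbv beta in Hk. apply Hk. rewrite Rabs_Ropp, Rabs_pos_eq; lra.
  - cbv beta. replace (x + IZR 0 * h) with x by ring. replace (x + IZR 1 * h) with (x + h) by ring.
    unfold d1. field. auto.
  - cbv beta. rewrite Hsym. replace (x + IZR 0 * h) with x by ring.
    replace (x + IZR (-1) * h) with (x + - h) by ring.
    unfold d2. field. auto.
Qed.
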